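(* Let $\gamma$ be a generator of $\mathbb{F}_q^*$. Let $Q(x,y_0,\dots,y_{s-1})=A(x)+\sum_{i=0}^{s-1}A_i(x)y_i$ with $A,A_0,\dots,A_{s-1}\in\mathbb{F}_q[x]$, not all $A_i$ zero. Then the set of all $f\in\mathbb{F}_q[x]$ of degree less than $q-1$ such that $Q\bigl(x,f(x),f(\gamma x),\dots,f(\gamma^{s-1}x)\bigr)=0$ is either empty or an $\mathbb{F}_q$-affine subspace of $\mathbb{F}_q[x]$ of dimension at most $s-1$. *)

(* Defs.v *)
From HB Require Import structures.
From mathcomp Require Import all_boot all_order all_algebra all_field.
Set Implicit Arguments. Unset Strict Implicit. Unset Printing Implicit Defensive.
Import GRing.Theory.
Local Open Scope ring_scope.

(* Q(x, f(x), f(gamma x), ..., f(gamma^(s-1) x)) = A + sum_i A_i * f(gamma^i x),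
   where f(gamma^i x) is the composition f \Po (gamma^i * 'X). *)
Definition Qeval (F : fieldType) (s : nat) (A : {poly F}) (As : 'I_s -> {poly F})
  (gamma : F) (f : {poly F}) : {poly F} :=
  A + \sum_(i < s) As i * (f \Po (gamma ^+ i *: 'X)).

Definition solution (F : finFieldType) (s : nat) (A : {poly F})
  (As : 'I_s -> {poly F}) (gamma : F) (f : {poly F}) : Prop :=
  (size f <= #|F|.-1)%N /\ Qeval A As gamma f = 0.

(* Main.v *)
Require Import Defs.
From HB Require Import structures.
From mathcomp Require Import all_boot all_order all_algebra all_field.
From mathcomp Require Import zify.
From Stdlib Require Classical_Prop.
Import GRing.Theory.
Set Implicit Arguments. Unset Strict Implicit.
Local Open Scope ring_scope.

Definition Lop (F : fieldType) (s : nat) (As : 'I_s -> {poly F}) (g : F) (f : {poly F}) :=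
  \sum_(i < s) As i * (f \Po (g ^+ i *: 'X)).


Lemma LopD (F : fieldType) (s : nat) (As : 'I_s -> {poly F}) (g : F) (u v : {poly F}) :
  Lop As g (u + v) = Lop As g u + Lop As g v.
Proof. by rewrite /Lop -big_split; apply: eq_bigr => i _; rewrite comp_polyD mulrDr. Qed.

Lemma LopZ (F : fieldType) (s : nat) (As : 'I_s -> {poly F}) (g : F) a (u : {poly F}) :
  Lop As g (a *: u) = a *: Lop As g u.
Proof. by rewrite /Lop scaler_sumr; apply: eq_bigr => i _; rewrite comp_polyZ scalerAr. Qed.

Lemma Lop0 (F : fieldType) (s : nat) (As : 'I_s -> {poly F}) (g : F) : Lop As g (0 : {poly F}) = 0.
Proof. by have := LopZ As g 0 0; rewrite !scale0r. Qed.

Lemma LopN (F : fieldType) (s : nat) (As : 'I_s -> {poly F}) (g : F) (u : {poly F}) : Lop As g (- u) = - Lop As g u.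
Proof. by rewrite -scaleN1r LopZ scaleN1r. Qed.

Lemma coef_compZX (F : fieldType) (c : F) (p : {poly F}) t :
  (p \Po (c *: 'X))`_t = c ^+ t * p`_t.
Proof.
rewrite comp_polyE coef_sum.
under eq_bigr => i _ do rewrite exprZn scalerA coefZ coefXn.
case: (ltnP t (size p)) => ht.
  rewrite (bigD1 (Ordinal ht)) //= eqxx mulr1 big1 ?addr0 1?mulrC //.
  move=> i /eqP hi; case: eqP => [e|]; last by rewrite mulr0.
  by exfalso; apply: hi; apply: val_inj.
rewrite nth_default // mulr0 big1 // => i _.
case: eqP => [e|]; last by rewrite mulr0.
by have := ltn_ord i; rewrite -e ltnNge ht.
Qed.

Definition Bl (F : fieldType) s (As : 'I_s -> {poly F}) (l : nat) : {poly F} :=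
  \sum_(i < s) (As i)`_l *: 'X^i.


Lemma coefL (F : fieldType) (s : nat) (As : 'I_s -> {poly F}) (g : F) f m :
  (Lop As g f)`_m = \sum_(l < m.+1) (Bl As l).[g ^+ (m - l)] * f`_(m - l).
Proof.
rewrite /Lop coef_sum.
under eq_bigr => i _ do rewrite coefM.
rewrite exchange_big /=; apply: eq_bigr => l _.
rewrite /Bl horner_sum mulr_suml; apply: eq_bigr => i _.
by rewrite hornerZ hornerXn coef_compZX exprAC mulrA.
Qed.

Lemma Bl_size (F : fieldType) (s : nat) (As : 'I_s -> {poly F}) l : (size (Bl As l) <= s)%N.
Proof.
rewrite /Bl; apply: leq_trans (size_sum _ _ _) _; apply/bigmax_leqP => i _.
by apply: leq_trans (size_scale_leq _ _) _; rewrite size_polyXn.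
Qed.

Lemma keycoef (F : fieldType) (s : nat) (As : 'I_s -> {poly F}) (g : F) (l0 : nat)
  (hl0 : forall l, (l < l0)%N -> Bl As l = 0) (f : {poly F}) j
  (hf : forall j', (j' < j)%N -> f`_j' = 0) :
  (Lop As g f)`_(j + l0) = (Bl As l0).[g ^+ j] * f`_j.
Proof.
have hlt : (l0 < (j + l0).+1)%N by lia.
rewrite coefL (bigD1 (Ordinal hlt)) //= addnK big1 ?addr0 // => l hl.
have hl' : (l : nat) != l0.
  by apply: contra hl => /eqP e; apply/eqP/val_inj.
case: (ltnP l l0) => h; first by rewrite hl0 // horner0 mul0r.
have := ltn_ord l; move=> hl2.
by rewrite hf ?mulr0 //; lia.
Qed.

Lemma uniq_zero (F : fieldType) (s : nat) (As : 'I_s -> {poly F}) (g : F) (l0 : nat)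
  (hl0 : forall l, (l < l0)%N -> Bl As l = 0) (n : nat) (f : {poly F})
  (hs : (size f <= n)%N) (hL : Lop As g f = 0)
  (hbad : forall j, (j < n)%N -> (Bl As l0).[g ^+ j] = 0 -> f`_j = 0) : f = 0.
Proof.
suff H : forall N j, (j < N)%N -> f`_j = 0.
  by apply/polyP => j; rewrite coef0 (H j.+1).
elim=> [//|N IH] j; rewrite ltnS leq_eqVlt => /orP [/eqP -> | ]; last exact: IH.
case: (ltnP N n) => hN; last by rewrite nth_default //; apply: leq_trans hN.
have := keycoef g hl0 (f := f) (j := N) IH.
rewrite hL coef0 => /esym /eqP; rewrite mulf_eq0 => /orP [/eqP hB|/eqP //].
exact: hbad.
Qed.

Lemma size_rVpoly (F : fieldType) d (v : 'rV[F]_d) : (size (rVpoly v) <= d)%N.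
Proof. by apply/leq_sizeP => j hj; rewrite coef_rVpoly insubF // ltnNge hj. Qed.

Lemma Lop_sum (F : fieldType) (s : nat) (As : 'I_s -> {poly F}) (g : F) m
  (c : 'I_m -> F) (p : 'I_m -> {poly F}) :
  Lop As g (\sum_(i < m) c i *: p i) = \sum_(i < m) c i *: Lop As g (p i).
Proof.
rewrite (big_morph (Lop As g) (LopD As g) (Lop0 As g)).
by apply: eq_bigr => i _; rewrite LopZ.
Qed.

Lemma rVpoly_sum (F : fieldType) d m (c : 'I_m -> F) (p : 'I_m -> 'rV[F]_d) :
  rVpoly (\sum_(i < m) c i *: p i) = \sum_(i < m) c i *: rVpoly (p i).
Proof. by rewrite linear_sum; apply: eq_bigr => i _; rewrite linearZ. Qed.

Unset Implicit Arguments.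

Theorem lemmaE8 (F : finFieldType) (gamma : F)
  (hgamma : (#|F|.-1).-primitive_root gamma)
  (s : nat) (A : {poly F}) (As : 'I_s -> {poly F})
  (hAs : exists i : 'I_s, As i != 0) :
  (forall f : {poly F}, ~ solution A As gamma f) \/
  exists (f0 : {poly F}) (k : nat) (b : 'I_k -> {poly F}),
    (k <= s.-1)%N /\
    forall f : {poly F},
      solution A As gamma f <->
      exists c : 'I_k -> F, f = f0 + \sum_(i < k) c i *: b i.
Proof.
case: (Classical_Prop.classic (exists f, solution A As gamma f)) => [[f0 [hs0 hQ0]]|nf];
  last by left => f hf; apply: nf; exists f.
right.
change (A + Lop As gamma f0 = 0) in hQ0.
set n := #|F|.-1 in hgamma hs0 *.
case: hAs => i0 hi0.
have exB : exists l, (fun l => Bl As l != 0) l.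
  exists (size (As i0)).-1; apply/eqP => hB.
  have := congr1 (fun p : {poly F} => p`_i0) hB.
  rewrite coef0 /Bl coef_sum (bigD1 i0) //= coefZ coefXn eqxx mulr1 big1 ?addr0.
    by move=> /eqP; rewrite -/(lead_coef _) lead_coef_eq0 (negbTE hi0).
  move=> i hi; rewrite coefZ coefXn.
  have -> : (i0 == i :> nat) = false.
    by apply/negbTE; apply: contra hi => /eqP e; apply/eqP/val_inj.
  by rewrite mulr0.
case: (ex_minnP exB) => l0 hB0 hmin.
have hl0 : forall l, (l < l0)%N -> Bl As l = 0.
  move=> l hl; apply/eqP; apply: contraTT hl => h; rewrite -leqNgt; exact: hmin.
pose bad := [pred j : 'I_n | (Bl As l0).[gamma ^+ j] == 0].
have hk : (#|bad| <= s.-1)%N.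
  have := @max_poly_roots _ _ [seq gamma ^+ (val j) | j <- enum bad] hB0.
  rewrite size_map -cardE => H.
  have {}H := H _ _.
  have hs := Bl_size As l0.
  suff : (#|bad| < size (Bl As l0))%N by lia.
  apply: H.
    by apply/allP => x /mapP [j hj ->]; rewrite mem_enum in hj; exact: hj.
  rewrite map_inj_in_uniq ?enum_uniq // => i j _ _ /eqP.
  by rewrite (eq_prim_root_expr hgamma) !modn_small ?ltn_ord // => /eqP /val_inj.
pose X := [seq r <- enum 'rV[F]_n | Lop As gamma (rVpoly r) == 0].
pose K := (<<X>>)%VS.
have memK : forall r, r \in K -> Lop As gamma (rVpoly r) = 0.
  move=> r hr; rewrite [r](@coord_span _ _ _ (in_tuple X) r hr).
  rewrite rVpoly_sum Lop_sum big1 // => i _.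
  have : (in_tuple X)`_i \in X.
    by apply: mem_nth; exact: ltn_ord.
  by rewrite mem_filter => /andP [/eqP -> _]; rewrite scaler0.
have memK' : forall r, Lop As gamma (rVpoly r) = 0 -> r \in K.
  by move=> r hr; apply: memv_span; rewrite mem_filter mem_enum andbT hr eqxx.
pose Pm : 'M[F]_(n, #|bad|) := \matrix_(j, t) ((j == enum_val t)%:R).
have hprE : forall (r : 'rV[F]_n) t, (r *m Pm) 0 t = r 0 (enum_val t).
  move=> r t; rewrite /Pm !mxE (bigD1 (enum_val t)) //= !mxE eqxx mulr1 big1 ?addr0 //.
  by move=> j hj; rewrite mxE (negbTE hj) mulr0.
have hdim : (\dim K <= #|bad|)%N.
  rewrite -(limg_dim_eq (f := linfun (mulmxr Pm))).
    by apply: leq_trans (dimvS (subvf _)) _; rewrite dimvf dim_matrix; lia.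
  apply/eqP; rewrite -subv0; apply/subvP => r.
  rewrite memv_cap memv_ker memv0 lfunE /= => /andP [hr /eqP hpr].
  have : rVpoly r = 0.
    apply: (@uniq_zero _ _ As gamma l0 hl0 n (rVpoly r) (size_rVpoly r) (memK r hr)).
    move=> j hj hBj; rewrite coef_rVpoly; case: insubP => [o _ ho|]; last by rewrite hj.
    have hbj : o \in bad by rewrite inE ho hBj.
    by rewrite -(enum_rankK_in hbj hbj) -hprE hpr mxE.
  by move=> h; apply/eqP; apply: (can_inj rVpolyK); rewrite h linear0.
exists f0, (\dim K), (fun i => rVpoly (vbasis K)`_i); split; first lia.
move=> f; split.
  case=> hs hQ; change (A + Lop As gamma f = 0) in hQ.
  have hsz : (size (f - f0)%R <= n)%N.
    by apply: leq_trans (size_polyD _ _) _; rewrite size_polyN geq_max hs hs0.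
  have hL : Lop As gamma (f - f0) = 0.
    rewrite LopD LopN.
    have e1 : Lop As gamma f = - A by apply/eqP; rewrite -addr_eq0 addrC hQ.
    have e2 : Lop As gamma f0 = - A by apply/eqP; rewrite -addr_eq0 addrC hQ0.
    by rewrite e1 e2 subrr.
  set r := poly_rV (f - f0) : 'rV[F]_n.
  have hr : rVpoly r = f - f0 by rewrite poly_rV_K.
  have hrK : r \in K by apply: memK'; rewrite hr.
  exists (fun i => coord (vbasis K) i r).
  have e := coord_vbasis hrK.
  rewrite -{1}(subrK f0 f) addrC -hr; congr (_ + _).
  by rewrite [in LHS]e rVpoly_sum.
case=> c ->; rewrite -rVpoly_sum; split.
  by apply: leq_trans (size_polyD _ _) _; rewrite geq_max hs0 size_rVpoly.
change (A + Lop As gamma (f0 + rVpoly (\sum_(i < \dim K) c i *: (vbasis K)`_i)) = 0).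
rewrite LopD memK ?addr0 //.
apply: memv_suml => i _; apply: memvZ; apply: vbasis_mem; apply: mem_nth.
by rewrite size_tuple.
Qed.
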